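(* Let $A$ and $B$ be nontrivial commutative groups. (a) If $A$ is a torsion group and $B$ is torsion-free, then $\mathcal D(A,B)=\{-\infty,0,\infty\}$. (b) If $A$ is a torsion group and $B$ is torsion-split with $B[\mathrm{tors}]\ne\{0\}$ and $B/B[\mathrm{tors}]\ne\{0\}$, then $\mathcal D(A,B)=\mathcal D(A,B[\mathrm{tors}])\cup\{\infty\}$. (c) If there is a surjective homomorphism $A\to\mathbb{Z}$, then $\mathcal D(A,B)=\widetilde{\mathbb N}$.
   Context: For commutative groups $A,B$, $B^A$ denotes the commutative group (under pointwise addition) of all maps $A\to B$. For $a\in A$, the difference operator $\Delta_a:B^A\to B^A$ is $(\Delta_a f)(x)=f(x+a)-f(x)$. Let $\widetilde{\mathbb N}=\mathbb N\cup\{-\infty,\infty\}$ ($\mathbb N=\{0,1,2,\dots\}$), totally ordered with $-\infty$ least and $\infty$ greatest. The functional degree $\operatorname{fdeg}(f)\in\widetilde{\mathbb N}$ of $f\in B^A$ is: $-\infty$ if $f=0$; otherwise the least $n\in\mathbb N$ such that $\Delta_{a_1}\cdots\Delta_{a_{n+1}}f=0$ for all $a_1,\dots,a_{n+1}\in A$; and $\infty$ if no such $n$ exists. $\mathcal D(A,B)=\{\operatorname{fdeg}(f):f\in B^A\}\subseteq\widetilde{\mathbb N}$. $B[\mathrm{tors}]$ is the torsion subgroup of $B$; $B$ is torsion-split if $B[\mathrm{tors}]$ is a direct summand of $B$. *)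

(* Defs.v *)
From HB Require Import structures.
From mathcomp Require Import all_boot all_order all_algebra.
From mathcomp Require Import boolp.
Set Implicit Arguments. Unset Strict Implicit. Unset Printing Implicit Defensive.
Import Order.TTheory GRing.Theory Num.Theory.
Local Open Scope ring_scope.

(* Extended naturals  N~ = N ∪ {-oo, +oo}, ordered -oo < 0 < 1 < ... < +oo. *)
Inductive enat := NegInf | Fin of nat | PosInf.

Section FDeg.
Variables A B : zmodType.

Definition delta (a : A) (f : A -> B) : A -> B := fun x => f (x + a) - f x.

Definition deltas (s : seq A) (f : A -> B) : A -> B := foldr delta f s.

Definition kills (n : nat) (f : A -> B) : Prop :=
  forall s : seq A, size s = n.+1 -> forall x, deltas s f x = 0.

(* is_fdeg f d  <->  fdeg f = d. *)
Definition is_fdeg (f : A -> B) (d : enat) : Prop :=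
  match d with
  | NegInf => forall x, f x = 0
  | Fin n => (exists x, f x != 0) /\ kills n f /\ (forall m, (m < n)%N -> ~ kills m f)
  | PosInf => (exists x, f x != 0) /\ (forall n, ~ kills n f)
  end.

Definition Dset (d : enat) : Prop := exists f : A -> B, is_fdeg f d.
End FDeg.

Section Tors.
Variable B : zmodType.

Definition is_tors (b : B) : Prop := exists n : nat, (0 < n)%N /\ b *+ n = 0.

Definition torsb : {pred B} := fun b => `[< is_tors b >].

Lemma torsb_zmod_closed : zmod_closed torsb.
Proof.
split.
  by apply/asboolP; exists 1%N; rewrite mulr1n.
move=> x y /asboolP [n [n0 xn]] /asboolP [m [m0 ym]]; apply/asboolP.
exists (n * m)%N; split; first by rewrite muln_gt0 n0.
by rewrite mulrnBl mulrnA xn mul0rn mulnC mulrnA ym mul0rn subr0.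
Qed.

HB.instance Definition _ := GRing.isZmodClosed.Build B torsb torsb_zmod_closed.

Record tors_sub := TorsSub { tors_val :> B; _ : tors_val \in torsb }.
HB.instance Definition _ := [isSub for tors_val].
HB.instance Definition _ := [Choice of tors_sub by <:].
HB.instance Definition _ := [SubChoice_isSubZmodule of tors_sub by <:].
End Tors.

Definition is_torsion_group (A : zmodType) : Prop := forall a : A, is_tors a.
Definition is_torsion_free (B : zmodType) : Prop :=
  forall (b : B) (n : nat), (0 < n)%N -> b *+ n = 0 -> b = 0.

Definition torsion_split (B : zmodType) : Prop :=
  exists C : B -> Prop,
    [/\ C 0, (forall x y, C x -> C y -> C (x - y)),
        (forall b, C b -> is_tors b -> b = 0) &
        (forall b, exists t c, is_tors t /\ C c /\ b = t + c)].

(* Main.v *)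
Require Import Defs.
From HB Require Import structures.
From mathcomp Require Import all_boot all_order all_algebra boolp zify.
Set Implicit Arguments. Unset Strict Implicit. Unset Printing Implicit Defensive.
Import GRing.Theory.
Local Open Scope ring_scope.

Section Gen.
Variables A B : zmodType.
Implicit Types (f g : A -> B) (s : seq A).

Lemma deltas_cons a s f x :
  deltas (a :: s) f x = deltas s f (x + a) - deltas s f x.
Proof. by []. Qed.

Lemma deltas_rcons s a f : deltas (rcons s a) f = deltas s (delta a f).
Proof. by rewrite /deltas foldr_rcons. Qed.

Lemma deltas_ext s f g : (forall x, f x = g x) -> forall x, deltas s f x = deltas s g x.
Proof.
move=> H; elim: s => [|a s IH] x //=; by rewrite /delta !IH.
Qed.

Lemma deltas_zero s f : (forall x, f x = 0) -> forall x, deltas s f x = 0.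
Proof.
move=> H; elim: s => [|a s IH] x //=; by rewrite /delta !IH subrr.
Qed.

Lemma deltas_add s f g x :
  deltas s (fun y => f y + g y) x = deltas s f x + deltas s g x.
Proof.
elim: s x => [|a s IH] x //=; rewrite /delta !IH.
by rewrite opprD addrACA.
Qed.

Lemma deltas_const s (c : B) x : s != [::] -> deltas s (fun _ : A => c) x = 0.
Proof.
case: s => // a s _.
elim: s a x => [|b s IH] a x /=; first by rewrite /delta subrr.
have E := IH b. rewrite /= in E. by rewrite [delta a _ x]/delta !E subrr.
Qed.

Lemma deltas_shift s f c x :
  deltas s (fun y => f (y + c)) x = deltas s f (x + c).
Proof.
elim: s x => [|a s IH] x /=; first by [].
by rewrite /delta !IH addrAC.
Qed.

Lemma kills_S n f : kills n.+1 f <-> forall a, kills n (delta a f).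
Proof.
split.
  move=> H a s hs x; rewrite -deltas_rcons; apply: H; by rewrite size_rcons hs.
move=> H s; case/lastP: s => [//|s a]; rewrite size_rcons => -[hs] x.
by rewrite deltas_rcons; apply: H.
Qed.

Lemma kills0E f : kills 0 f <-> forall a x, f (x + a) = f x.
Proof.
split.
  move=> H a x; apply/eqP; rewrite -subr_eq0; apply/eqP; exact: (H [:: a]).
move=> H [|a [|]] //= _ x; by rewrite /delta H subrr.
Qed.

Lemma kills_mono m f : kills m f -> kills m.+1 f.
Proof.
move=> H [|a s] //= [hs] x; by rewrite /delta !H // subrr.
Qed.

Lemma kills_le m n f : kills m f -> (m <= n)%N -> kills n f.
Proof.
move=> H; elim: n => [|n IH]; first by rewrite leqn0 => /eqP <-.
rewrite leq_eqVlt => /orP [/eqP <-//|]; rewrite ltnS => /IH; exact: kills_mono.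
Qed.

Lemma kills_ext n f g : (forall x, f x = g x) -> kills n f -> kills n g.
Proof. by move=> E H s hs x; rewrite -(deltas_ext s E) H. Qed.

Lemma kills_add n f g : kills n f -> kills n g -> kills n (fun y => f y + g y).
Proof. by move=> Hf Hg s hs x; rewrite deltas_add Hf // Hg // addr0. Qed.

Lemma kills_shift n f c : kills n f -> kills n (fun y => f (y + c)).
Proof. by move=> H s hs x; rewrite deltas_shift H. Qed.

Lemma kills_zero n f : (forall x, f x = 0) -> kills n f.
Proof. by move=> H s _ x; rewrite deltas_zero. Qed.

Lemma deltas_nseq_vanish (g : A -> B) a n x :
  (forall j, (j < n)%N -> g (x + a *+ j) = 0) -> deltas (nseq n a) g x = g (x + a *+ n).
Proof.
elim: n x => [|n IH] x H /=; first by rewrite mulr0n addr0.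
rewrite /delta IH; last by move=> j hj; rewrite -addrA -mulrS; apply: H.
rewrite IH; last by move=> j hj; apply: H; exact: ltnW.
by rewrite H // subr0 -addrA -mulrS.
Qed.

Lemma nonzero_of_deltas s f x : deltas s f x != 0 -> exists y, f y != 0.
Proof.
move=> H; case: (pselect (exists y, f y != 0)) => // N.
have Z : forall y, f y = 0.
  move=> y; apply/eqP; apply: contra_notT N => ne; by exists y.
by move: H; rewrite (deltas_zero s Z) eqxx.
Qed.

End Gen.

Lemma deltas_post (A B C : zmodType) (h : B -> C) (f : A -> B) s x :
  (forall u v, h (u - v) = h u - h v) ->
  deltas s (fun y => h (f y)) x = h (deltas s f x).
Proof.
move=> Hh; elim: s x => [|a s IH] x //=; by rewrite /delta !IH Hh.
Qed.

Lemma deltas_pre (A A' B : zmodType) (phi : A -> A') (g : A' -> B) s x :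
  (forall u v, phi (u + v) = phi u + phi v) ->
  deltas s (fun y => g (phi y)) x = deltas (map phi s) g (phi x).
Proof.
move=> Hp; elim: s x => [|a s IH] x //=; by rewrite /delta !IH Hp.
Qed.

Lemma kills_post (A B C : zmodType) (h : B -> C) (f : A -> B) n :
  (forall u v, h (u - v) = h u - h v) -> kills n f -> kills n (fun y => h (f y)).
Proof.
move=> Hh H s hs x; rewrite deltas_post // H //.
by rewrite -(subrr (0:B)) Hh subrr.
Qed.

Lemma key_tors (A B : zmodType) (P : B -> Prop) :
  is_torsion_group A -> (forall x y, P x -> P y -> P (x - y)) ->
  (forall b, P b -> is_tors b -> b = 0) ->
  forall n (f : A -> B), (forall x, P (f x)) -> kills n f -> kills 0 f.
Proof.
move=> hA hP hT; elim=> [//|n IH] f Pf /kills_S H.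
have H0 : forall a, kills 0 (delta a f).
  move=> a; apply: IH (H a) => x; exact: hP.
apply/kills0E => a x.
have inv : forall y b, delta a f (y + b) = delta a f y by move=> y b; exact: (proj1 (kills0E _) (H0 a)).
set c := f (x + a) - f x.
have Hj : forall j, f (x + a *+ j) = f x + c *+ j.
  elim=> [|j IHj]; first by rewrite !mulr0n !addr0.
  have E : f (x + a *+ j.+1) = f (x + a *+ j) + delta a f (x + a *+ j).
    by rewrite mulrSr addrA /delta addrCA subrr addr0.
  have D : delta a f (x + a *+ j) = c by rewrite inv.
  by rewrite E D IHj mulrSr -addrA.
have [m [m0 am]] := hA a.
have cm : c *+ m = 0.
  have := Hj m; rewrite am addr0 => E; apply: (addrI (f x)); by rewrite -E addr0.
have : c = 0 by apply: hT; [exact: hP | exists m].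
by move/eqP; rewrite subr_eq0 => /eqP.
Qed.

Lemma posinf_fdeg (A B : zmodType) (P : B -> Prop) (c : B) :
  is_torsion_group A -> (exists a : A, a != 0) ->
  (forall x y, P x -> P y -> P (x - y)) ->
  (forall b, P b -> is_tors b -> b = 0) -> P 0 -> P c -> c != 0 ->
  is_fdeg (fun x : A => if x == 0 then c else 0) PosInf.
Proof.
move=> hA [a0 a0n] hP hT P0 Pc cn; split; first by exists 0; rewrite eqxx.
move=> n /(key_tors hA hP hT) H.
have /H {}H : forall x : A, P (if x == 0 then c else 0) by move=> x; case: ifP.
move/kills0E: H => /(_ a0 0); rewrite add0r eqxx (negbTE a0n) => E.
by move: cn; rewrite -E eqxx.
Qed.

Lemma const_fdeg (A B : zmodType) (c : B) : c != 0 -> is_fdeg (fun _ : A => c) (Fin 0).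
Proof.
move=> cn; split; first by exists 0.
by split => // ; apply/kills0E.
Qed.

Lemma is_tors_sub (B : zmodType) (u v : B) : is_tors u -> is_tors v -> is_tors (u - v).
Proof.
move=> hu hv; have: (u - v) \in @torsb B by apply: rpredB; apply/asboolP.
by move/asboolP.
Qed.

Fixpoint sumP (g : int -> int) (m : nat) : int :=
  match m with 0%N => 0 | m'.+1 => sumP g m' + g (Posz m') end.
Fixpoint sumN (g : int -> int) (m : nat) : int :=
  match m with 0%N => 0 | m'.+1 => sumN g m' + g (Negz m') end.
Definition anti (g : int -> int) (k : int) : int :=
  match k with Posz m => sumP g m | Negz m => - sumN g m.+1 end.

Lemma anti_step g k : anti g (k + 1) = anti g k + g k.
Proof.
case: k => m.
  have -> : Posz m + 1 = Posz m.+1 by rewrite -addn1 PoszD.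
  by [].
case: m => [|m].
  have -> : Negz 0 + 1 = Posz 0 by [].
  by rewrite /= add0r addNr.
have -> : Negz m.+1 + 1 = Negz m by rewrite !NegzE; lia.
by rewrite /= [in RHS]opprD subrK.
Qed.

Lemma kills_int_step (B : zmodType) n (g : int -> B) :
  kills n (delta 1 g) -> kills n.+1 g.
Proof.
move=> H; apply/kills_S => a.
have HP : forall m : nat, kills n (delta (Posz m) g).
  elim=> [|m IH].
    by apply: kills_zero => y; rewrite /delta addr0 subrr.
  apply: (@kills_ext _ _ _ (fun y => delta (Posz m) g y + delta 1 g (y + Posz m))).
    move=> y; rewrite /delta.
    have -> : y + Posz m.+1 = y + Posz m + 1 by rewrite -addrA -PoszD addn1.
    by rewrite addrC addrA subrK.
  by apply: kills_add => //; apply: kills_shift.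
case: a => [m|m]; first exact: HP.
apply: (@kills_ext _ _ _ (fun y => - delta (Posz m.+1) g (y + Negz m))).
  move=> y; rewrite /delta.
  have -> : y + Negz m + Posz m.+1 = y by rewrite NegzE addrNK.
  by rewrite opprB.
apply: (@kills_post _ _ _ (fun u : B => - u)); first by move=> u v; rewrite opprB opprK addrC.
exact: kills_shift.
Qed.

Fixpoint qn (n : nat) : int -> int :=
  match n with 0%N => fun _ => 1 | n'.+1 => anti (qn n') end.

Lemma kills_qn n : kills n (qn n).
Proof.
elim: n => [|n IH] /=; first by apply/kills0E.
apply: kills_int_step; apply: kills_ext IH => y.
by rewrite /delta anti_step addrAC subrr add0r.
Qed.

Lemma nseqS_rcons (T : Type) n (a : T) : nseq n.+1 a = rcons (nseq n a) a.
Proof. by elim: n => //= n <-. Qed.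

Lemma deltas_qn n x : deltas (nseq n 1) (qn n) x = 1.
Proof.
elim: n x => [|n IH] x //.
rewrite nseqS_rcons deltas_rcons -[RHS](IH x); apply: deltas_ext => y /=.
by rewrite /delta anti_step addrAC subrr add0r.
Qed.

Lemma part_c (A B : zmodType) (hB : exists b : B, b != 0) (phi : A -> int) :
  (forall x y, phi (x + y) = phi x + phi y) ->
  (forall z : int, exists x, phi x = z) -> forall d, Dset A B d.
Proof.
move=> hadd hsurj; have [b bn] := hB.
have [e he] := hsurj 1.
have hpost : forall u v : int, b *~ (u - v) = b *~ u - b *~ v by move=> u v; rewrite mulrzBr.
have Hdel : forall (g : int -> int) s x,
    deltas s (fun y => b *~ g (phi y)) x = b *~ deltas (map phi s) g (phi x).
  move=> g s x; rewrite (deltas_post (h := fun z => b *~ z)) //.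
  by rewrite (deltas_pre g).
case=> [|n|].
- by exists (fun _ => 0).
- exists (fun x => b *~ qn n (phi x)).
  have Hlow : deltas (nseq n e) (fun x => b *~ qn n (phi x)) 0 = b.
    by rewrite Hdel map_nseq he deltas_qn mulr1z.
  split; first by apply: (nonzero_of_deltas (s := nseq n e) (x := 0)); rewrite Hlow.
  split.
    by move=> s hs x; rewrite Hdel kills_qn ?size_map // mulr0z.
  move=> m hm K.
  have K' := kills_le K (_ : (m <= n.-1)%N).
  have : deltas (nseq n e) (fun x => b *~ qn n (phi x)) 0 = 0.
    apply: K'; first by rewrite -ltnS prednK ?(leq_ltn_trans _ hm).
    by rewrite size_nseq prednK // (leq_ltn_trans _ hm).
  by rewrite Hlow => E; move: bn; rewrite E eqxx.
- pose ind := fun k : int => if k == 0 then 1 else 0 : int.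
  exists (fun x => b *~ ind (phi x)); split.
    have [x0 hx0] := hsurj 0; exists x0; by rewrite hx0 /ind eqxx mulr1z.
  move=> n K.
  have [x0 hx0] := hsurj (- (Posz n.+1)).
  have : deltas (nseq n.+1 e) (fun x => b *~ ind (phi x)) x0 = 0.
    by apply: K; rewrite size_nseq.
  rewrite Hdel map_nseq he deltas_nseq_vanish; last first.
    move=> j hj; rewrite /ind hx0 natz.
    have -> : (- Posz n.+1 + Posz j == 0) = false by apply/eqP; lia.
    by [].
  rewrite hx0 natz /ind.
  have -> : (- Posz n.+1 + Posz n.+1 == 0) = true by rewrite addNr.
  by rewrite mulr1z => E; move: bn; rewrite E eqxx.
Qed.

Section TorsTransfer.
Variables (A B : zmodType).

Lemma val_tors0 (u : tors_sub B) : (val u == 0) = (u == 0).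
Proof. by rewrite -(inj_eq val_inj) GRing.val0. Qed.

Lemma deltas_val (g : A -> tors_sub B) s x :
  deltas s (fun y => val (g y)) x = val (deltas s g x).
Proof. by rewrite (deltas_post (h := val)) // => u v; rewrite GRing.valB. Qed.

Lemma kills_val n (g : A -> tors_sub B) : kills n (fun y => val (g y)) <-> kills n g.
Proof.
split=> K s hs x.
  by apply/eqP; rewrite -val_tors0 -deltas_val K.
by rewrite deltas_val K // GRing.val0.
Qed.

Lemma fdeg_val (g : A -> tors_sub B) d :
  is_fdeg g d <-> is_fdeg (fun y => val (g y)) d.
Proof.
have nz : (exists x, g x != 0) <-> (exists x, val (g x) != 0).
  by split=> -[x hx]; exists x; rewrite ?val_tors0 // -val_tors0.
case: d => [|n|] /=.
- split=> H x; first by rewrite H GRing.val0.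
  by apply/eqP; rewrite -val_tors0; apply/eqP; exact: H.
- split=> -[H1 [H2 H3]]; (split; first by apply/nz); split.
  + by apply/kills_val.
  + by move=> m hm /kills_val; apply: H3.
  + by apply/kills_val.
  + by move=> m hm /kills_val; apply: H3.
- split=> -[H1 H2]; (split; first by apply/nz).
  + by move=> n /kills_val; apply: H2.
  + by move=> n /kills_val; apply: H2.
Qed.
End TorsTransfer.

Lemma zmod_id5 (B : zmodType) (a p b q r : B) :
  a - p - (b - q) - (a - b - r) = r - (p - q).
Proof.
rewrite !opprB !addrA (addrAC _ (-b) r) subrK [LHS]addrC !addrA addNr add0r.
by rewrite [LHS]addrC (addrC (-p)) addrA.
Qed.

Lemma fdeg_subc (A B : zmodType) (f : A -> B) (c : B) n :
  (0 < n)%N -> is_fdeg f (Fin n) -> is_fdeg (fun y => f y - c) (Fin n).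
Proof.
move=> n0 [H1 [H2 H3]].
have E : forall s x, s != [::] -> deltas s (fun y => f y - c) x = deltas s f x.
  by move=> s x hs; rewrite (deltas_add s f (fun _ => - c)) deltas_const // addr0.
have KE : forall m, kills m (fun y => f y - c) <-> kills m f.
  move=> m; split=> K s hs x.
    by rewrite -E ?K //; case: s hs.
  by rewrite E ?K //; case: s hs.
split; last split.
- case: (pselect (exists x, f x - c != 0)) => // N; exfalso.
  have Z : forall y, f y - c = 0.
    move=> y; apply/eqP; apply: contra_notT N => ne; by exists y.
  apply: (H3 0%N n0); apply/kills0E => a x.
  by have := Z (x + a); have := Z x; move=> /eqP; rewrite subr_eq0 => /eqP -> /eqP; rewrite subr_eq0 => /eqP.
- by apply/KE.
- by move=> m hm /KE; apply: H3.
Qed.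

Lemma part_a (A B : zmodType) (hA : exists a : A, a != 0) (hB : exists b : B, b != 0) :
  is_torsion_group A -> is_torsion_free B ->
     forall d, Dset A B d <-> (d = NegInf \/ d = Fin 0 \/ d = PosInf).
Proof.
move=> hAt hBf d; have [b bn] := hB.
have hP : forall x y : B, True -> True -> True by [].
have hT : forall b : B, True -> is_tors b -> b = 0.
  by move=> b' _ [n [n0 hn]]; exact: hBf hn.
split.
- case: d => [|n|] [f Hf]; [by left| |by right; right].
  case: n Hf => [|n] Hf; first by right; left.
  exfalso; case: Hf => _ [K K3]; apply: (K3 0%N) => //.
  exact: (key_tors (P := fun _ => True) hAt hP hT (f := f) _ K).
- case=> [->|[->|->]].
  + by exists (fun _ => 0).
  + by exists (fun _ => b); apply: const_fdeg.
  + by exists (fun x : A => if x == 0 then b else 0); apply: (posinf_fdeg (P := fun _ => True)).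
Qed.

Lemma part_b (A B : zmodType) (hA : exists a : A, a != 0) :
  is_torsion_group A -> torsion_split B ->
     (exists t : B, is_tors t /\ t != 0) ->
     (exists b : B, ~ is_tors b) ->
     forall d, Dset A B d <-> (Dset A (tors_sub B) d \/ d = PosInf).
Proof.
move=> hAt [C [C0 Csub Ctf Cdec]] [t0 [t0t t0n]] [b bnt] d.
have Hex : forall b : B, exists c, C c /\ is_tors (b - c).
  move=> b'; have [t [c [tt [Cc ->]]]] := Cdec b'; exists c; split=> //.
  by rewrite addrK.
have [pi Hpi] := choice Hex.
have piB : forall u v, pi (u - v) = pi u - pi v.
  move=> u v; apply/eqP; rewrite -subr_eq0; apply/eqP; apply: Ctf.
    exact: (Csub _ _ (Hpi _).1 (Csub _ _ (Hpi _).1 (Hpi _).1)).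
  rewrite -(zmod_id5 u (pi u) v (pi v) (pi (u - v))); apply: is_tors_sub; last exact: (Hpi _).2.
  by apply: is_tors_sub; exact: (Hpi _).2.
split.
- case: d => [|n|] [f Hf]; [left|left|by right].
  + by exists (fun _ => 0).
  + case: n Hf => [|n] Hf.
      have pf : t0 \in @torsb B by apply/asboolP.
      exists (fun _ => TorsSub pf); apply: const_fdeg.
      by rewrite -val_tors0.
    have K := Hf.2.1.
    have Kpi : kills n.+1 (fun x => pi (f x)) by apply: kills_post.
    have /kills0E K0 := key_tors (P := C) hAt Csub Ctf (fun x => (Hpi (f x)).1) Kpi.
    have Epi : forall x, pi (f x) = pi (f 0) by move=> x; have := K0 x 0; rewrite add0r.
    have pf : forall x, (f x - pi (f 0)) \in @torsb B.
      by move=> x; rewrite -(Epi x); apply/asboolP; exact: (Hpi _).2.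
    exists (fun x => TorsSub (pf x)); apply/fdeg_val => /=.
    exact: fdeg_subc.
- case=> [[g Hg]|->].
    by exists (fun y => val (g y)); apply/fdeg_val.
  have [t [c [tt [Cc Eb]]]] := Cdec b.
  have cn : c != 0.
    by apply/eqP => c0; apply: bnt; rewrite Eb c0 addr0.
  by exists (fun x : A => if x == 0 then c else 0); apply: (posinf_fdeg (P := C)).
Qed.

Theorem proposition3p9 (A B : zmodType)
  (hA : exists a : A, a != 0) (hB : exists b : B, b != 0) :
  (* (a) *)
  (is_torsion_group A -> is_torsion_free B ->
     forall d, Dset A B d <-> (d = NegInf \/ d = Fin 0 \/ d = PosInf)) /\
  (* (b) *)
  (is_torsion_group A -> torsion_split B ->
     (exists t : B, is_tors t /\ t != 0) ->
     (exists b : B, ~ is_tors b) ->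
     forall d, Dset A B d <-> (Dset A (tors_sub B) d \/ d = PosInf)) /\
  (* (c) *)
  ((exists phi : A -> int,
       (forall x y, phi (x + y) = phi x + phi y) /\
       (forall z : int, exists x, phi x = z)) ->
     forall d, Dset A B d).
Proof.
split; first exact: part_a.
split; first exact: part_b.
by move=> [phi [h1 h2]]; exact: part_c h1 h2.
Qed.
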